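(* Let $n \geq 2$ be an integer and let $F$ be any field of characteristic zero. For $a = (a_1,\dots,a_{n-1}) \in F^{n-1}$ define the polynomials $Q_a(x) = n(x - a_1/n)(x-a_2)\cdots(x-a_{n-1}) \in F[x]$ and $P_{a,0}(x) = \int_0^x Q_a(t)\,dt \in F[x]$ (the unique antiderivative of $Q_a$ with zero constant term). Then there exist $a_1,\dots,a_{n-1} \in F$ such that the values $P_{a,0}(a_1/n), P_{a,0}(a_2), \dots, P_{a,0}(a_{n-1})$ are pairwise distinct. *)

(* Defs.v *)
From mathcomp Require Import all_boot all_order all_algebra.
Set Implicit Arguments. Unset Strict Implicit. Unset Printing Implicit Defensive.
Import GRing.Theory Num.Theory.
Local Open Scope ring_scope.

Definition antideriv (F : fieldType) (p : {poly F}) : {poly F} :=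
  \poly_(i < (size p).+1) (if i is j.+1 then p`_j / (j.+1)%:R else 0).

(* The points a_1/n, a_2, ..., a_{n-1}; the vector a is indexed by 'I_(n-1),
   with index 0 corresponding to a_1. *)
Definition crit_pts (F : fieldType) (n : nat) (a : 'I_n.-1 -> F) (i : 'I_n.-1) : F :=
  if val i == 0%N then a i / n%:R else a i.

Definition Qa (F : fieldType) (n : nat) (a : 'I_n.-1 -> F) : {poly F} :=
  n%:R *: \prod_(i < n.-1) ('X - (crit_pts a i)%:P).

Definition Pa0 (F : fieldType) (n : nat) (a : 'I_n.-1 -> F) : {poly F} :=
  antideriv (Qa a).

(* Main.v *)
Require Import Defs.
From mathcomp Require Import all_boot all_order all_algebra.
From mathcomp Require Import ring.
Import GRing.Theory Num.Theory.
Local Open Scope ring_scope.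

Lemma coef_antideriv (F : fieldType) (p : {poly F}) i :
  (antideriv p)`_i = if i is j.+1 then p`_j / (j.+1)%:R else 0.
Proof.
rewrite /antideriv coef_poly; case: ltnP => // hi; case: i hi => // j hj.
by rewrite nth_default ?mul0r // -ltnS.
Qed.

Lemma antiderivD (F : fieldType) (p q : {poly F}) :
  antideriv (p + q) = antideriv p + antideriv q.
Proof.
apply/polyP => i; rewrite coefD !coef_antideriv; case: i => [|j].
  by rewrite addr0.
by rewrite coefD mulrDl.
Qed.

Lemma antiderivZ (F : fieldType) (c : F) (p : {poly F}) :
  antideriv (c *: p) = c *: antideriv p.
Proof.
apply/polyP => i; rewrite coefZ !coef_antideriv; case: i => [|j].
  by rewrite mulr0.
by rewrite coefZ mulrA.
Qed.

Lemma uniq_map_transfer (T U V : eqType) (f : T -> U) (g : T -> V) (s : seq T) :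
  {in s &, forall x y, f x != f y -> g x != g y} ->
  uniq (map f s) -> uniq (map g s).
Proof.
elim: s => // x s IH H /= /andP [nf u]; apply/andP; split; last first.
  by apply: IH => // y z ys zs; apply: H; rewrite inE ?ys ?zs orbT.
apply/mapP => [[y ys e]].
have : f x != f y.
  by apply/eqP => e'; move/negP: nf; apply; apply/mapP; exists y.
move/(H x y); rewrite !inE eqxx ys orbT e eqxx.
by move/(_ isT isT).
Qed.

Lemma natf_inj (F : fieldType) (hchar : [pchar F] =i pred0) :
  injective (fun k : nat => k%:R : F).
Proof.
have nz k : (0 < k)%N -> k%:R != 0 :> F.
  move=> k0; apply/negP => /(natf0_pchar k0) [q].
  by rewrite hchar.
move=> k l /= e; apply/eqP; case: (ltngtP k l) => // h.
  by move: (nz (l - k)%N); rewrite subn_gt0 h natrB ?(ltnW h) // e subrr eqxx => /(_ isT).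
by move: (nz (k - l)%N); rewrite subn_gt0 h natrB ?(ltnW h) // e subrr eqxx => /(_ isT).
Qed.

Lemma exists_nonroot (F : fieldType) (hchar : [pchar F] =i pred0)
  (p : {poly F}) : p != 0 -> exists t, ~~ root p t.
Proof.
move=> p0.
case: (boolP (has (fun k : nat => ~~ root p k%:R) (iota 0 (size p)))).
  by case/hasP => k _ h; exists k%:R.
rewrite -all_predC => hall.
have : (size [seq k%:R : F | k <- iota 0 (size p)] < size p)%N.
  apply: max_poly_roots => //.
    by apply/allP => x /mapP [k kin ->]; move/allP: hall => /(_ k kin) /= /negPn.
  by rewrite map_inj_uniq ?iota_uniq //; exact: natf_inj.
by rewrite size_map size_iota ltnn.
Qed.

Lemma key (F : fieldType) (hchar : [pchar F] =i pred0) (m : nat) :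
  exists s : seq F, size s = m /\
    uniq [seq (antideriv (\prod_(c <- s) ('X - c%:P))).[x] | x <- s].
Proof.
elim: m => [|m [s [hs hu]]]; first by exists [::].
set Pi := \prod_(c <- s) ('X - c%:P) in hu *.
set P := antideriv Pi in hu *.
pose R := antideriv (Pi * 'X).
pose G x := R - P * 'X + (P.[x] *: 'X - (R.[x])%:P).
pose L := [seq (R.[x] - R.[y]) / (P.[x] - P.[y]) | x <- s, y <- s].
pose H := (\prod_(x <- s) G x) * \prod_(l <- L) ('X - l%:P).
have HG x : G x != 0.
  apply/eqP => e; move: (congr1 (fun q : {poly F} => q`_m.+2) e) => {e}.
  rewrite /G !coefD coefN coefMX coefZ coefX coefC /= !coef_antideriv coefMX /=.
  idtac.
  have lc : Pi`_m = 1.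
    have := monic_prod_XsubC s predT id => /monicP.
    by rewrite /lead_coef size_prod_XsubC hs.
  rewrite lc /= coefN coefC /= mulr0 oppr0 !addr0 !div1r => /eqP.
  rewrite subr_eq0 => /eqP /invr_inj /eqP.
  by rewrite [X in X == _]mulrSr -subr_eq0 addrAC subrr add0r oner_eq0.
have HH : H != 0.
  rewrite mulf_neq0 //; rewrite prodf_seq_neq0; apply/allP => y _ //=.
  by rewrite polyXsubC_eq0.
have [t rt] := exists_nonroot _ hchar _ HH.
move: rt; rewrite /root /H hornerM mulf_eq0 negb_or !horner_prod.
rewrite !prodf_seq_neq0 => /andP [/allP hG /allP hL].
exists (rcons s t); split; first by rewrite size_rcons hs.
have EP : antideriv (\prod_(c <- rcons s t) ('X - c%:P)) = R + (-t) *: P.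
  rewrite big_rcons /= -/Pi -polyCN mulrDr [Pi * _%:P]mulrC mul_polyC.
  by rewrite antiderivD antiderivZ.
rewrite EP map_rcons rcons_uniq; apply/andP; split.
  apply/mapP => [[x xs]] /eqP e.
  have := hG x xs; rewrite /= /G => /negP; apply.
  rewrite !(hornerD, hornerN, hornerM, hornerZ, hornerX, hornerC).
  rewrite !(hornerD, hornerN, hornerM, hornerZ, hornerX, hornerC) in e.
  by move/eqP: e => e; apply/eqP; rewrite -[RHS](subrr (R.[x] + - t * P.[x])) -{1}e; ring.
apply: uniq_map_transfer hu => x y xs ys nxy; apply/eqP => e.
rewrite !(hornerD, hornerN, hornerM, hornerZ, hornerX, hornerC) in e.
have := hL _ (allpairs_f (fun x y => (R.[x] - R.[y]) / (P.[x] - P.[y])) xs ys).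
rewrite /= hornerXsubC; apply/negP/negPn; rewrite subr_eq0; apply/eqP.
have e2 : R.[x] - R.[y] = t * (P.[x] - P.[y]).
  have h0 : (R.[x] + - t * P.[x]) - (R.[y] + - t * P.[y]) = 0 by rewrite e subrr.
  by apply/eqP; rewrite -subr_eq0 -h0; apply/eqP; ring.
by rewrite e2 mulfK // subr_eq0.
Qed.

Theorem lemma2p4 (F : fieldType) (n : nat) (hn : (2 <= n)%N)
  (hchar : [pchar F] =i pred0) :
  exists a : 'I_n.-1 -> F,
    forall i j : 'I_n.-1, i != j ->
      (Pa0 a).[crit_pts a i] != (Pa0 a).[crit_pts a j].
Proof.
have [s [hs hu]] := key _ hchar n.-1.
have n0 : n%:R != 0 :> F.
  apply/negP => /(natf0_pchar (ltnW hn)) [q]; by rewrite hchar.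
exists (fun i : 'I_n.-1 => if val i == 0%N then n%:R * s`_i else s`_i).
have hc i : crit_pts (fun i : 'I_n.-1 => if val i == 0%N then n%:R * s`_i else s`_i) i = s`_i.
  by rewrite /crit_pts; case: eqP => // _; rewrite mulrC mulKf.
have hP : Pa0 (fun i : 'I_n.-1 => if val i == 0%N then n%:R * s`_i else s`_i)
   = n%:R *: antideriv (\prod_(c <- s) ('X - c%:P)).
  rewrite /Pa0 /Qa antiderivZ; congr (_ *: _); congr antideriv.
  rewrite (eq_bigr (fun i : 'I_n.-1 => 'X - (s`_i)%:P)); last by move=> i _; rewrite hc.
  by rewrite (big_nth 0) hs big_mkord.
move=> i j ij; rewrite hP !hc !hornerZ (inj_eq (mulfI n0)).
have si : (i < size s)%N by rewrite hs.
have sj : (j < size s)%N by rewrite hs.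
by rewrite -(nth_map 0 0 _ si) -(nth_map 0 0 _ sj) nth_uniq ?size_map.
Qed.
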